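(* In the MHAV setting described in the context, suppose there is $b>0$ such that for all $\lambda\in\Lambda$ and all $y,y'\in Y$ with $\phi_Y(y,y')>0$, $$\frac{\bar\Pi(\lambda,y')\,\phi_Y(y',y)}{\bar\Pi(\lambda,y)\,\phi_Y(y,y')}>b.$$ Then the Markov kernel $\bar P_{\mathrm{MH}}$ on $\Lambda\times Y$ is irreducible and aperiodic.
   Context: MHAV setting: $Y$ is a finite nonempty set, $f:Y\to\mathbb{R}$; $\Lambda=\{\lambda_1<\lambda_2<\dots<\lambda_n\}$ is a finite set of positive reals with $n\ge2$; $\bar\Pi(\lambda,y)=\lambda^{-f(y)}/Z$ on $\Lambda\times Y$ with $Z=\sum_{\lambda,y}\lambda^{-f(y)}$. $\phi_Y$ is an irreducible Markov kernel on $Y$. For $\alpha'\in(0,1)$, $\phi_\Lambda$ is the kernel on $\Lambda$ with $\phi_\Lambda(\lambda_1,\lambda_2)=1$, $\phi_\Lambda(\lambda_n,\lambda_{n-1})=1$, and for $1<i<n$, $\phi_\Lambda(\lambda_i,\lambda_{i+1})=\alpha'$, $\phi_\Lambda(\lambda_i,\lambda_{i-1})=1-\alpha'$, all other entries $0$. For $\alpha,\beta\in(0,1)$ with $\alpha+\beta<1$, the proposal $\bar\phi$ on $\Lambda\times Y$ is $\bar\phi[(\lambda,y),(\lambda',y')]=\alpha\phi_\Lambda(\lambda,\lambda')$ if $\lambda\ne\lambda',y=y'$; $=\beta\phi_Y(y,y')$ if $\lambda=\lambda',y\ne y'$; $=(1-\alpha-\beta)+\beta\phi_Y(y,y)$ if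 $\lambda=\lambda',y=y'$; and $=0$ if $\lambda\ne\lambda',y\ne y'$. The acceptance probability is $\bar{\mathsf{Acc}}(x,x')=\min\{1,\frac{\bar\phi(x',x)\bar\Pi(x')}{\bar\phi(x,x')\bar\Pi(x)}\}$ and $\bar P_{\mathrm{MH}}(x,x')=\bar\phi(x,x')\bar{\mathsf{Acc}}(x,x')$ for $x\ne x'$, $\bar P_{\mathrm{MH}}(x,x)=1-\sum_{x'\ne x}\bar\phi(x,x')\bar{\mathsf{Acc}}(x,x')$. *)

(* Defs.v *)
From HB Require Import structures.
From mathcomp Require Import all_boot all_order all_algebra.
From mathcomp Require Import reals exp.
Set Implicit Arguments. Unset Strict Implicit. Unset Printing Implicit Defensive.
Import Order.TTheory GRing.Theory Num.Theory.
Local Open Scope ring_scope.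

Section Kernels.
Variables (R : realType) (T : finType).

Fixpoint kpow (K : T -> T -> R) (m : nat) (x y : T) : R :=
  match m with
  | 0%N => (x == y)%:R
  | m'.+1 => \sum_(z : T) K x z * kpow K m' z y
  end.

Definition markov_kernel (K : T -> T -> R) : Prop :=
  (forall x y, 0 <= K x y) /\ (forall x, \sum_(y : T) K x y = 1).

Definition irreducible (K : T -> T -> R) : Prop :=
  forall x y, exists m : nat, 0 < kpow K m x y.

(* aperiodic: for every x, gcd{ m >= 1 : K^m(x,x) > 0 } = 1, i.e. the only
   common divisor of all return times is 1 *)
Definition aperiodic (K : T -> T -> R) : Prop :=
  forall x (d : nat),
    (forall m : nat, (0 < m)%N -> 0 < kpow K m x x -> (d %| m)%N) -> d = 1%N.
End Kernels.

Section MHAV.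
Variables (R : realType) (Y : finType) (n : nat) (lam : 'I_n -> R) (f : Y -> R).

Definition piw (x : 'I_n * Y) : R := powR (lam x.1) (- f x.2).
Definition Zc : R := \sum_(x : 'I_n * Y) piw x.
Definition Pibar (x : 'I_n * Y) : R := piw x / Zc.

(* phi_Lambda on indices 0..n-1 (lambda_{i+1} <-> index i) *)
Definition phiL (alpha' : R) (i j : 'I_n) : R :=
  if val i == 0%N then (val j == 1%N)%:R
  else if val i == n.-1 then (val j == n.-2)%:R
  else if val j == (val i).+1 then alpha'
  else if (val j).+1 == val i then 1 - alpha'
  else 0.

Definition phibar (phiY : Y -> Y -> R) (alpha' alpha beta : R)
    (x x' : 'I_n * Y) : R :=
  if (x.1 != x'.1) && (x.2 == x'.2) then alpha * phiL alpha' x.1 x'.1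
  else if (x.1 == x'.1) && (x.2 != x'.2) then beta * phiY x.2 x'.2
  else if (x.1 == x'.1) && (x.2 == x'.2) then (1 - alpha - beta) + beta * phiY x.2 x.2
  else 0.

Definition Accbar phiY alpha' alpha beta (x x' : 'I_n * Y) : R :=
  Num.min 1 ((phibar phiY alpha' alpha beta x' x * Pibar x') /
             (phibar phiY alpha' alpha beta x x' * Pibar x)).

Definition PMH phiY alpha' alpha beta (x x' : 'I_n * Y) : R :=
  if x != x' then phibar phiY alpha' alpha beta x x' * Accbar phiY alpha' alpha beta x x'
  else 1 - \sum_(z : 'I_n * Y | z != x)
             phibar phiY alpha' alpha beta x z * Accbar phiY alpha' alpha beta x z.
End MHAV.

(* Main.v *)
Require Import Defs.
From HB Require Import structures.
From mathcomp Require Import all_boot all_order all_algebra.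
From mathcomp Require Import reals exp.
From mathcomp Require Import ring lra zify.
Import Order.TTheory GRing.Theory Num.Theory.
Local Open Scope ring_scope.
Set Implicit Arguments. Unset Strict Implicit.

Section Gen.
Variables (R : realType) (T : finType) (K : T -> T -> R).
Hypothesis K0 : forall x y, 0 <= K x y.

Lemma sum_ind (a : T) (c : T -> R) : \sum_t c t * (t == a)%:R = c a.
Proof.
rewrite (bigD1 a) //= eqxx mulr1 big1 ?addr0 // => t /negbTE ->; by rewrite mulr0.
Qed.

Lemma kpow_ge0 m x y : 0 <= kpow K m x y.
Proof.
elim: m x y => [|m IH] x y /=; first by rewrite ler0n.
by apply: sumr_ge0 => z _; apply: mulr_ge0.
Qed.

Lemma kpow1 x y : kpow K 1 x y = K x y.
Proof. by rewrite /= sum_ind. Qed.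

Lemma kpow_step m x y z : 0 < K x y -> 0 < kpow K m y z -> 0 < kpow K m.+1 x z.
Proof.
move=> h1 h2 /=; rewrite (bigD1 y) //=.
apply: (lt_le_trans (mulr_gt0 h1 h2)); rewrite lerDl.
by apply: sumr_ge0 => w _; apply: mulr_ge0 => //; apply: kpow_ge0.
Qed.

Inductive reach : T -> T -> Prop :=
| rr x : reach x x
| rs x y z : 0 < K x y -> reach y z -> reach x z.

Lemma reach_trans x y z : reach x y -> reach y z -> reach x z.
Proof. elim=> // a b c h _ IH r; apply: rs h (IH r). Qed.

Lemma reach_kpow x z : reach x z -> exists m, 0 < kpow K m x z.
Proof.
elim=> [a|a b c h _ [m Hm]]; first by exists 0%N; rewrite /= eqxx ltr01.
by exists m.+1; apply: kpow_step h Hm.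
Qed.
End Gen.

Lemma sum_pos_ex (R : realType) (T : finType) (F : T -> R) :
  0 < \sum_t F t -> exists t, 0 < F t.
Proof.
move=> h; case: (pickP (fun t => 0 < F t)) => [t ht|H]; first by exists t.
have : \sum_t F t <= 0 by apply: sumr_le0 => t _; rewrite leNgt H.
by rewrite leNgt h.
Qed.

Section M.
Variables (R : realType) (Y : finType) (f : Y -> R) (n : nat) (lam : 'I_n -> R)
  (phiY : Y -> Y -> R) (alpha' alpha beta : R).
Hypothesis lam0 : forall i, 0 < lam i.
Hypothesis phiY0 : forall x y, 0 <= phiY x y.
Hypothesis phiY1 : forall x, \sum_y phiY x y = 1.
Hypothesis ha'0 : 0 < alpha'.
Hypothesis ha'1 : alpha' < 1.
Hypothesis ha0 : 0 < alpha.
Hypothesis hb0 : 0 < beta.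
Hypothesis hab : alpha + beta < 1.

Ltac L := have := ha'0; have := ha'1; have := ha0; have := hb0; have := hab; lra.
Ltac N := have := ha'0; have := ha'1; have := ha0; have := hb0; have := hab; nra.

Lemma Pibar_gt0 x : 0 < Pibar lam f x.
Proof.
have hp z : 0 < piw lam f z by apply: powR_gt0.
rewrite /Pibar divr_gt0 // /Zc (bigD1 x) //=.
apply: (lt_le_trans (hp x)); rewrite lerDl; apply: sumr_ge0 => z _; exact: ltW.
Qed.

Lemma phiL_ge0 i j : 0 <= @phiL R n alpha' i j.
Proof.
rewrite /phiL; case: ifP => _; first by rewrite ler0n.
case: ifP => _; first by rewrite ler0n.
case: ifP => _; first exact: ltW. case: ifP => _ //; by rewrite subr_ge0 ltW.
Qed.

Notation pb := (@phibar R Y n phiY alpha' alpha beta).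
Notation Acc := (Accbar lam f phiY alpha' alpha beta).
Notation P := (PMH lam f phiY alpha' alpha beta).

Lemma pb_ge0 x x' : 0 <= pb x x'.
Proof.
rewrite /phibar; case: ifP => _; first by apply: mulr_ge0 (phiL_ge0 _ _); exact: ltW.
case: ifP => _; first by apply: mulr_ge0 (phiY0 _ _); exact: ltW.
case: ifP => _ //; apply: addr_ge0; last exact: mulr_ge0 (ltW hb0) (phiY0 _ _).
L.
Qed.

Lemma Acc_ge0 x x' : 0 <= Acc x x'.
Proof.
rewrite /Accbar le_min ler01 /=; apply: divr_ge0; apply: mulr_ge0;
  by [apply: pb_ge0 | apply: ltW; apply: Pibar_gt0].
Qed.

Lemma Acc_le1 x x' : Acc x x' <= 1.
Proof. by rewrite /Accbar ge_min lexx. Qed.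

Lemma P_move x x' : x != x' -> 0 < pb x x' -> 0 < pb x' x -> 0 < P x x'.
Proof.
move=> hx h1 h2; rewrite /PMH hx mulr_gt0 // /Accbar lt_min ltr01 /=.
by apply: divr_gt0; apply: mulr_gt0 => //; apply: Pibar_gt0.
Qed.

Lemma sum_ord_ind (k : nat) (c : R) : 0 <= c ->
  \sum_(j : 'I_n) c * (val j == k)%:R <= c.
Proof.
move=> hc; case: (ltnP k n) => hk.
  rewrite (eq_bigr (fun j => c * (j == Ordinal hk)%:R)) //.
  by rewrite (sum_ind (Ordinal hk) (fun _ => c)).
rewrite big1 // => j _; have : (val j != k) by rewrite neq_ltn (leq_trans (ltn_ord j) hk).
by move/negbTE ->; rewrite mulr0.
Qed.

Lemma phiL_sum i : \sum_j @phiL R n alpha' i j <= 1.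
Proof.
rewrite /phiL; case h0: (val i == 0%N).
  by rewrite (eq_bigr (fun j : 'I_n => 1 * (val j == 1%N)%:R)) ?sum_ord_ind // => j _; rewrite mul1r.
case h1: (val i == n.-1).
  by rewrite (eq_bigr (fun j : 'I_n => 1 * (val j == n.-2)%:R)) ?sum_ord_ind // => j _; rewrite mul1r.
apply: (le_trans (y := \sum_(j : 'I_n) (alpha' * (val j == (val i).+1)%:R
                                + (1 - alpha') * (val j == (val i).-1)%:R))).
  apply: ler_sum => j _; case: ifP => _; first by rewrite mulr1n mulr1; have := ler0n R (val j == (val i).-1); N.
  case: ifP => [/eqP hj|_]; first by rewrite -hj /= eqxx mulr0n mulr1n mulr0 add0r mulr1.
  apply: addr_ge0; apply: mulr_ge0; rewrite ?ler0n //; L.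
rewrite big_split /=.
have g1 := sum_ord_ind (val i).+1 (ltW ha'0).
have g2 : 0 <= 1 - alpha' by L.
have := sum_ord_ind (val i).-1 g2; L.
Qed.

Lemma pair_sum (F : 'I_n * Y -> R) : \sum_p F p = \sum_j \sum_y F (j, y).
Proof. by rewrite pair_big /=; apply: eq_bigr => -[j y']. Qed.

Lemma off_sum x : \sum_(z | z != x) pb x z <= alpha + beta.
Proof.
case: x => i y.
pose g (z : 'I_n * Y) := alpha * @phiL R n alpha' i z.1 * (z.2 == y)%:R
   + beta * phiY y z.2 * (z.1 == i)%:R.
have g0 z : 0 <= g z.
  apply: addr_ge0; apply: mulr_ge0; rewrite ?ler0n //; apply: mulr_ge0;
   by [apply: ltW | apply: phiL_ge0 | apply: phiY0].
apply: (le_trans (y := \sum_(z | z != (i, y)) g z)).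
  apply: ler_sum => -[j y'] hz; rewrite /phibar /g /=.
  move: hz; case: (eqVneq j i) => [->|hij]; case: (eqVneq y' y) => [->|hyy] hz /=.
  - by rewrite eqxx in hz.
  - by rewrite mulr0 add0r mulr1.
  - by rewrite mulr1 mulr0 addr0.
  - by rewrite !mulr0 addr0.
apply: (le_trans (y := \sum_z g z)).
  by rewrite [X in _ <= X](bigD1 (i, y)) //= lerDr.
rewrite big_split /= !pair_sum /=.
have e1 : \sum_j \sum_y' alpha * @phiL R n alpha' i j * (y' == y)%:R
          = alpha * \sum_j @phiL R n alpha' i j.
  rewrite mulr_sumr; apply: eq_bigr => j _.
  exact: (sum_ind y (fun _ => alpha * @phiL R n alpha' i j)).
have e2 : \sum_j \sum_y' beta * phiY y y' * (j == i)%:R = beta.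
  rewrite exchange_big /=; transitivity (\sum_y' beta * phiY y y').
    apply: eq_bigr => y' _; exact: (sum_ind i (fun _ => beta * phiY y y')).
  by rewrite -mulr_sumr phiY1 mulr1.
rewrite e1 e2 lerD2r; apply: ler_piMr; [exact: ltW | exact: phiL_sum].
Qed.

Lemma P_diag x : 0 < P x x.
Proof.
rewrite /PMH eqxx /=.
have h : \sum_(z | z != x) pb x z * Acc x z <= alpha + beta.
  apply: le_trans (off_sum x); apply: ler_sum => z _.
  rewrite -[X in _ <= X]mulr1; apply: ler_wpM2l; [exact: pb_ge0 | exact: Acc_le1].
move: h; L.
Qed.

Lemma P_ge0 x x' : 0 <= P x x'.
Proof.
case: (eqVneq x x') => [<-|hx]; first exact: ltW (P_diag x).
by rewrite /PMH hx mulr_ge0 // ?pb_ge0 ?Acc_ge0.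
Qed.

Hypothesis hn : (2 <= n)%N.
Hypothesis hirr : irreducible phiY.
Variable b : R.
Hypothesis hb : 0 < b.
Hypothesis Hb : forall (i : 'I_n) (y y' : Y), 0 < phiY y y' ->
     (Pibar lam f (i, y') * phiY y' y) / (Pibar lam f (i, y) * phiY y y') > b.

Lemma ve (k : 'I_n) : val k = nat_of_ord k. Proof. by []. Qed.

Lemma phiL_up (i j : 'I_n) : val j = (val i).+1 -> 0 < @phiL R n alpha' i j.
Proof.
move=> hj; rewrite /phiL hj; case: ifP => [/eqP ->|h0] /=; first by rewrite ltr0n.
case: ifP => [/eqP h1|_]; first by exfalso; have := hn; have := ltn_ord j; move: hj h1; rewrite !ve; lia.
by rewrite eqxx.
Qed.

Lemma phiL_down (i j : 'I_n) : val j = (val i).+1 -> 0 < @phiL R n alpha' j i.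
Proof.
move=> hj; rewrite /phiL hj /=; case: ifP => [/eqP h1|_].
  have -> : (val i == n.-2) by apply/eqP; have := hn; move: h1; rewrite ?ve; lia.
  by rewrite ltr0n.
have -> : (val i == (val i).+2) = false by lia.
by rewrite eqxx subr_gt0.
Qed.

Lemma lam_move (i j : 'I_n) y : val j = (val i).+1 ->
  0 < P (i, y) (j, y) /\ 0 < P (j, y) (i, y).
Proof.
move=> hj.
have hij : i != j by apply/eqP => e; move: hj; rewrite e; lia.
have e1 : pb (i, y) (j, y) = alpha * @phiL R n alpha' i j by rewrite /phibar /= hij eqxx.
have e2 : pb (j, y) (i, y) = alpha * @phiL R n alpha' j i by rewrite /phibar /= eq_sym hij eqxx.
have hx : (i, y) != (j, y) by rewrite xpair_eqE negb_and hij.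
have p1 : 0 < pb (i, y) (j, y) by rewrite e1 mulr_gt0 // phiL_up.
have p2 : 0 < pb (j, y) (i, y) by rewrite e2 mulr_gt0 // phiL_down.
by split; apply: P_move => //; rewrite eq_sym.
Qed.

Lemma y_move i y y' : y != y' -> 0 < phiY y y' -> 0 < P (i, y) (i, y').
Proof.
move=> hyy h.
have h' : 0 < phiY y' y.
  rewrite lt_neqAle phiY0 andbT; apply/eqP => e.
  have := Hb i h; rewrite -e mulr0 mul0r => /(lt_trans hb); by rewrite ltxx.
have hx : (i, y) != (i, y') by rewrite xpair_eqE negb_and hyy orbT.
apply: P_move => //; rewrite /phibar /= eqxx /=.
  by rewrite hyy mulr_gt0.
by rewrite eq_sym hyy mulr_gt0.
Qed.

Lemma y_reach m i y y' : 0 < kpow phiY m y y' -> reach P (i, y) (i, y').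
Proof.
elim: m y => [|m IH] y /=.
  by case: (eqVneq y y') => [->|_]; [move=> _; apply: rr | rewrite ltxx].
move=> /sum_pos_ex [z hz].
have hz1 : 0 < phiY y z.
  rewrite lt_neqAle phiY0 andbT; apply/eqP => e.
  by move: hz; rewrite -e mul0r ltxx.
have hz2 : 0 < kpow phiY m z y' by rewrite -(pmulr_rgt0 _ hz1).
case: (eqVneq y z) => [->|hyz]; first exact: IH.
exact: rs (y_move i hyz hz1) (IH _ hz2).
Qed.

Lemma lam_reach y (i0 : 'I_n) : val i0 = 0%N -> forall i : 'I_n,
  reach P (i0, y) (i, y) /\ reach P (i, y) (i0, y).
Proof.
move=> h0 i; move: {2}(val i) (erefl (val i)) => m; elim: m i => [|m IH] i hi.
  have -> : i = i0 by apply: val_inj; rewrite /= hi h0.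
  by split; apply: rr.
have hm : (m < n)%N by have := ltn_ord i; move: hi; rewrite ?ve; lia.
have [r1 r2] := IH (Ordinal hm) erefl.
have [s1 s2] := lam_move (i := Ordinal hm) (j := i) y hi.
split; first exact: reach_trans r1 (rs s1 (rr _ _)).
exact: rs s2 r2.
Qed.

Lemma main_irr : irreducible P.
Proof.
move=> [i y] [j y'].
have h0 : (0 < n)%N by have := hn; lia.
have [_ r1] := lam_reach y (i0 := Ordinal h0) erefl i.
have [r2 _] := lam_reach y (i0 := Ordinal h0) erefl j.
have [m hm] := hirr y y'.
have r3 := y_reach j hm.
apply: reach_kpow; first exact: P_ge0.
exact: reach_trans r1 (reach_trans r2 r3).
Qed.

Lemma main_aper : aperiodic P.
Proof.
move=> x d hd; apply/eqP; rewrite -dvdn1; apply: hd => //.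
by rewrite kpow1 P_diag.
Qed.
End M.

Unset Implicit Arguments.
Theorem lemma14 (R : realType) (Y : finType) (y0 : Y) (f : Y -> R)
    (n : nat) (lam : 'I_n -> R) (phiY : Y -> Y -> R) (alpha' alpha beta b : R) :
  (2 <= n)%N ->
  (forall i, 0 < lam i) ->
  (forall i j : 'I_n, (val i < val j)%N -> lam i < lam j) ->
  markov_kernel phiY -> irreducible phiY ->
  0 < alpha' < 1 -> 0 < alpha < 1 -> 0 < beta < 1 -> alpha + beta < 1 ->
  0 < b ->
  (forall (i : 'I_n) (y y' : Y), 0 < phiY y y' ->
     (Pibar lam f (i, y') * phiY y' y) / (Pibar lam f (i, y) * phiY y y') > b) ->
  irreducible (PMH lam f phiY alpha' alpha beta) /\
  aperiodic (PMH lam f phiY alpha' alpha beta).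
Proof.
move=> hn lam0 _ [phiY0 phiY1] hirr /andP[ha'0 ha'1] /andP[ha0 _] /andP[hb0 _] hab hb Hb.
split.
  exact: (main_irr lam0 phiY0 phiY1 ha'0 ha'1 ha0 hb0 hab hn hirr hb Hb).
exact: (main_aper (lam := lam) (f := f) phiY0 phiY1 ha'0 ha'1 ha0 hb0 hab).
Qed.
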